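(* Let $A$ be an AUF algebra. Then $\mathrm{Coh}_{\mathrm L}(A)$ has a projective generator if and only if $A$ is strongly AUF.
   Context: All algebras are associative $\mathbb C$-algebras, not necessarily unital. An idempotent is $e$ with $e^2=e$. An algebra $A$ is AUF if there is a family $(e_i)_{i\in\mathfrak I}$ of mutually orthogonal idempotents with $\dim e_iAe_j<\infty$ and $A=\sum_{i,j}e_iAe_j$. A left $A$-module $M$ is quasicoherent if $\xi\in A\xi$ for all $\xi\in M$, coherent if moreover finitely generated; $\mathrm{Coh}_{\mathrm L}(A)$ is the category of coherent left $A$-modules. Irreducible means nonzero with no nonzero proper submodules. An idempotent $e$ is generating if every irreducible quasicoherent left $A$-module is a quotient of $Ae$; $A$ is strongly AUF if it has a generating idempotent. A projective generator of $\mathrm{Coh}_{\mathrm L}(A)$ is an object that is projective as a left $A$-module and such that every object of $\mathrm{Coh}_{\mathrm L}(A)$ is a quotient of $M^{\oplus n}$ for some $n\ge1$. *)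

(* Defs.v *)
From HB Require Import structures.
From mathcomp Require Import all_boot all_algebra.
From mathcomp Require Import complex.
From mathcomp Require Import reals Rstruct.
Set Implicit Arguments. Unset Strict Implicit. Unset Printing Implicit Defensive.
Import GRing.Theory.
Local Open Scope ring_scope.

Definition CC : fieldType := complex Rdefinitions.R.

Record nualg := NuAlg {
  acar :> lmodType CC;
  amul : acar -> acar -> acar;
  amulDl : forall (c : CC) (x y z : acar), amul (c *: x + y) z = c *: amul x z + amul y z;
  amulDr : forall (c : CC) (x y z : acar), amul z (c *: x + y) = c *: amul z x + amul z y;
  amulA : forall x y z : acar, amul x (amul y z) = amul (amul x y) z }.

Record lmodule (A : nualg) := LModule {
  mcar :> lmodType CC;
  act : A -> mcar -> mcar;
  actDl : forall (c : CC) (a b : A) (m : mcar), act (c *: a + b) m = c *: act a m + act b m;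
  actDr : forall (c : CC) (a : A) (m n : mcar), act a (c *: m + n) = c *: act a m + act a n;
  actA : forall (a b : A) (m : mcar), act (amul a b) m = act a (act b m) }.

Section Defs.
Variable A : nualg.
Local Notation "x * y" := (amul x y) : ring_scope.

Definition idempotent (e : A) : Prop := e * e = e.

Definition fin_dim_subspace (V : A -> Prop) : Prop :=
  exists s : seq A, forall x, V x ->
    exists c : 'I_(size s) -> CC, x = \sum_(k < size s) c k *: s`_k.

Definition AUF : Prop :=
  exists (I : Type) (e : I -> A),
    (forall i, idempotent (e i)) /\
    (forall i j, i <> j -> e i * e j = 0) /\
    (forall i j, fin_dim_subspace (fun x => exists a, x = e i * a * e j)) /\
    (forall x : A, exists s : seq ((I * I) * A),
        x = \sum_(t <- s) (e t.1.1 * t.2 * e t.1.2)).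

Definition is_hom (M N : lmodule A) (f : M -> N) : Prop :=
  (forall (c : CC) (x y : M), f (c *: x + y) = c *: f x + f y) /\
  (forall (a : A) (x : M), f (act a x) = act a (f x)).

Definition submodule (M : lmodule A) (P : M -> Prop) : Prop :=
  P 0 /\ (forall (c : CC) x y, P x -> P y -> P (c *: x + y)) /\
  (forall a x, P x -> P (act a x)).

Definition quasicoherent (M : lmodule A) : Prop :=
  forall xi : M, exists a : A, xi = act a xi.

Definition fin_generated (M : lmodule A) : Prop :=
  exists gens : seq M, forall P : M -> Prop, submodule P ->
    (forall g, g \in gens -> P g) -> forall x, P x.

Definition coherent (M : lmodule A) : Prop :=
  quasicoherent M /\ fin_generated M.

Definition irreducible (M : lmodule A) : Prop :=
  (exists x : M, x <> 0) /\
  forall P : M -> Prop, submodule P ->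
    (forall x, P x -> x = 0) \/ (forall x, P x).

Definition Ae (e : A) := {x : A | exists a : A, x = a * e}.

Definition is_hom_from_Ae (e : A) (M : lmodule A) (f : Ae e -> M) : Prop :=
  (forall (c : CC) (x y z : Ae e), proj1_sig z = c *: proj1_sig x + proj1_sig y ->
      f z = c *: f x + f y) /\
  (forall (a : A) (x z : Ae e), proj1_sig z = a * proj1_sig x -> f z = act a (f x)).

Definition quotient_of_Ae (e : A) (M : lmodule A) : Prop :=
  exists f : Ae e -> M, is_hom_from_Ae f /\ forall m : M, exists x, f x = m.

Definition generating_idempotent (e : A) : Prop :=
  idempotent e /\
  forall M : lmodule A, irreducible M -> quasicoherent M -> quotient_of_Ae e M.

Definition strongly_AUF : Prop := AUF /\ exists e : A, generating_idempotent e.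

Definition projective (P : lmodule A) : Prop :=
  forall (N N' : lmodule A) (p : N -> N') (f : P -> N'),
    is_hom p -> (forall y, exists x, p x = y) -> is_hom f ->
    exists g : P -> N, is_hom g /\ forall x, p (g x) = f x.

(* N is a quotient of M^{(+) n}: there is a surjective homomorphism
   M^{(+) n} -> N, written out via the universal property of the direct sum
   as an n-tuple of homomorphisms (f_k) with (m_k) |-> sum_k f_k m_k onto. *)
Definition quotient_of_power (M N : lmodule A) (n : nat) : Prop :=
  exists f : 'I_n -> M -> N, (forall k, is_hom (f k)) /\
    forall y : N, exists x : 'I_n -> M, y = \sum_(k < n) f k (x k).

Definition projective_generator_Coh (M : lmodule A) : Prop :=
  coherent M /\ projective M /\
  forall N : lmodule A, coherent N -> exists n, (1 <= n)%N /\ quotient_of_power M N n.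

End Defs.

(* Main.v *)
Require Import Defs.
From HB Require Import structures.
From mathcomp Require Import all_boot all_algebra.
From mathcomp Require Import boolp classical_sets.
From Stdlib Require Import Classical.
Set Implicit Arguments. Unset Strict Implicit. Unset Printing Implicit Defensive.
Import GRing.Theory.
Local Open Scope ring_scope.

Section LinFacts.
Variables (U V : lmodType CC) (f : U -> V).
Hypothesis Hf : forall c x y, f (c *: x + y) = c *: f x + f y.
Lemma lfD x y : f (x + y) = f x + f y.
Proof. by have := Hf 1 x y; rewrite !scale1r. Qed.
Lemma lf0 : f 0 = 0.
Proof. by apply: (@addrI _ (f 0)); rewrite addr0 -lfD addr0. Qed.
Lemma lfZ c x : f (c *: x) = c *: f x.
Proof. by have := Hf c x 0; rewrite !addr0 lf0 addr0. Qed.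
Lemma lfN x : f (- x) = - f x.
Proof. by rewrite -scaleN1r lfZ scaleN1r. Qed.
Lemma lfB x y : f (x - y) = f x - f y.
Proof. by rewrite lfD lfN. Qed.
Lemma lf_sum (I : Type) (r : seq I) (P : pred I) (F : I -> U) :
  f (\sum_(i <- r | P i) F i) = \sum_(i <- r | P i) f (F i).
Proof. exact: (big_morph f lfD lf0). Qed.
End LinFacts.

Section Quot.
Variables (A : nualg) (N : lmodule A) (K : N -> Prop).
Definition Qt (HK : submodule K) := {P : N -> Prop | exists x : N, P = fun y => K (y - x)}.
Variable HK : submodule K.
Local Notation Q := (Qt HK).
HB.instance Definition _ := gen_eqMixin Q.
HB.instance Definition _ := gen_choiceMixin Q.

Lemma K0 : K 0. Proof. by case: HK. Qed.
Lemma KD x y : K x -> K y -> K (x + y).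
Proof. by case: HK => _ [H _] kx ky; have := H 1 x y kx ky; rewrite scale1r. Qed.
Lemma KZ c x : K x -> K (c *: x).
Proof. by case: HK => h0 [H _] kx; have := H c x 0 kx h0; rewrite addr0. Qed.
Lemma KN x : K x -> K (- x).
Proof. by move=> kx; rewrite -scaleN1r; apply: KZ. Qed.
Lemma KB x y : K x -> K y -> K (x - y).
Proof. by move=> kx ky; apply: KD => //; apply: KN. Qed.
Lemma Kact a x : K x -> K (act a x).
Proof. by case: HK => _ [_ H]; apply: H. Qed.

Definition cls (x : N) : Q := exist _ (fun y => K (y - x)) (ex_intro _ x erefl).
Definition rep (q : Q) : N := proj1_sig (cid (proj2_sig q)).

Lemma repK q : cls (rep q) = q.
Proof.
rewrite /rep; case: cid => x /= hx; case: q hx => P hP /= hx.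
by apply: eq_exist.
Qed.

Lemma cls_eq x y : cls x = cls y <-> K (x - y).
Proof.
split.
  move=> /(congr1 (@proj1_sig _ _)) /= /(congr1 (fun P => P x)) <-.
  by rewrite subrr; apply: K0.
move=> kxy; apply: eq_exist; apply: funext => z; apply: propext; split=> h.
  by have := KD h kxy; rewrite addrA subrK.
by have := KB h kxy; rewrite opprB addrA subrK.
Qed.

Lemma repP x : K (rep (cls x) - x).
Proof. by apply/cls_eq; rewrite repK. Qed.

Lemma quot_ind (P : Q -> Prop) : (forall x, P (cls x)) -> forall q, P q.
Proof. by move=> h q; rewrite -(repK q). Qed.

Definition qzero : Q := cls 0.
Definition qadd (p q : Q) : Q := cls (rep p + rep q).
Definition qopp (p : Q) : Q := cls (- rep p).
Definition qscale (c : CC) (p : Q) : Q := cls (c *: rep p).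
Definition qact (a : A) (p : Q) : Q := cls (act a (rep p)).

Lemma qaddE x y : qadd (cls x) (cls y) = cls (x + y).
Proof.
apply/cls_eq; rewrite opprD addrACA; apply: KD; exact: repP.
Qed.
Lemma qoppE x : qopp (cls x) = cls (- x).
Proof. by apply/cls_eq; rewrite opprK addrC -opprB; apply: KN; apply: repP. Qed.
Lemma qscaleE c x : qscale c (cls x) = cls (c *: x).
Proof. apply/cls_eq; rewrite -scalerBr; apply: KZ; exact: repP. Qed.
Lemma qactE a x : qact a (cls x) = cls (act a x).
Proof.
apply/cls_eq; rewrite -(lfB (fun c m n => actDr c a m n)); apply: Kact; exact: repP.
Qed.

Lemma qaddA : associative qadd.
Proof. by elim/quot_ind=> x; elim/quot_ind=> y; elim/quot_ind=> z; rewrite !qaddE addrA. Qed.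
Lemma qaddC : commutative qadd.
Proof. by elim/quot_ind=> x; elim/quot_ind=> y; rewrite !qaddE addrC. Qed.
Lemma qadd0 : left_id qzero qadd.
Proof. by elim/quot_ind=> x; rewrite qaddE add0r. Qed.
Lemma qaddN : left_inverse qzero qopp qadd.
Proof. by elim/quot_ind=> x; rewrite qoppE qaddE addNr. Qed.

HB.instance Definition _ := GRing.isZmodule.Build Q qaddA qaddC qadd0 qaddN.
Lemma clsD x y : cls x + cls y = cls (x + y). Proof. exact: qaddE. Qed.
Lemma cls0 : cls 0 = 0. Proof. by []. Qed.

Lemma qscaleA a b v : qscale a (qscale b v) = qscale (a * b) v.
Proof. by elim/quot_ind: v => x; rewrite !qscaleE scalerA. Qed.
Lemma qscale1 : left_id 1 qscale.
Proof. by elim/quot_ind=> x; rewrite qscaleE scale1r. Qed.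
Lemma qscaleDr : right_distributive qscale +%R.
Proof. by move=> c; elim/quot_ind=> x; elim/quot_ind=> y; rewrite clsD !qscaleE clsD scalerDr. Qed.
Lemma qscaleDl v : {morph qscale^~ v: a b / a + b}.
Proof. by elim/quot_ind: v => x a b; rewrite /= !qscaleE clsD scalerDl. Qed.

HB.instance Definition _ := GRing.Zmodule_isLmodule.Build CC Q qscaleA qscale1 qscaleDr qscaleDl.

Lemma clsZ c x : c *: cls x = cls (c *: x). Proof. exact: qscaleE. Qed.
Lemma qclsL c x y : cls (c *: x + y) = c *: cls x + cls y.
Proof. by rewrite clsZ clsD. Qed.

Lemma qactDl c a b m : qact (c *: a + b) m = c *: qact a m + qact b m.
Proof. by elim/quot_ind: m => x; rewrite !qactE actDl qclsL. Qed.
Lemma qactDr c a m n : qact a (c *: m + n) = c *: qact a m + qact a n.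
Proof.
elim/quot_ind: m => x; elim/quot_ind: n => y.
by rewrite -qclsL !qactE actDr qclsL.
Qed.
Lemma qactA a b m : qact (amul a b) m = qact a (qact b m).
Proof. by elim/quot_ind: m => x; rewrite !qactE actA. Qed.

Definition quotmod : lmodule A := LModule qactDl qactDr qactA.

End Quot.

Section QuotFacts.
Variables (A : nualg) (N : lmodule A) (K : N -> Prop) (HK : submodule K).

Lemma cls_eqE (x y : N) : (cls HK x = cls HK y) <-> K (x - y).
Proof. exact: cls_eq. Qed.
Lemma cls_eq0 (x : N) : (cls HK x = 0 :> quotmod HK) <-> K x.
Proof. by have := cls_eq HK x 0; rewrite subr0. Qed.
Lemma quotind (P : quotmod HK -> Prop) : (forall x, P (cls HK x)) -> forall q, P q.
Proof. exact: quot_ind. Qed.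
Lemma cls_lin c x y : cls HK (c *: x + y) = c *: (cls HK x : quotmod HK) + cls HK y.
Proof. exact: qclsL. Qed.
Lemma cls_act a x : act a (cls HK x : quotmod HK) = cls HK (act a x).
Proof. exact: qactE. Qed.
Lemma cls_zero : (cls HK 0 : quotmod HK) = 0.
Proof. by []. Qed.
End QuotFacts.

Lemma lf_sum0 (U V : lmodType CC) (f : U -> V)
  (Hf : forall c x y, f (c *: x + y) = c *: f x + f y) (I : Type) (r : seq I) (F : I -> U) :
  f (\sum_(i <- r) F i) = \sum_(i <- r) f (F i).
Proof. exact: (big_morph f (lfD Hf) (lf0 Hf)). Qed.

Lemma big_In_eq (V : nmodType) (I : Type) (r : seq I) (F G : I -> V) :
  (forall i, List.In i r -> F i = G i) -> \sum_(i <- r) F i = \sum_(i <- r) G i.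
Proof.
elim: r => [|x r IH] h; first by rewrite !big_nil.
rewrite !big_cons h /=; last by left.
by rewrite IH // => i hi; apply: h; right.
Qed.

Lemma big_In_nz (V : nmodType) (I : Type) (r : seq I) (F : I -> V) :
  \sum_(i <- r) F i <> 0 -> exists i, List.In i r /\ F i <> 0.
Proof.
move=> h; apply: NNPP => hn; apply: h.
rewrite (big_In_eq (G := fun _ => 0)) ?big1 // => i hi.
by apply: NNPP => hF; apply: hn; exists i.
Qed.

Section Alg.
Variable A : nualg.

Lemma amulL (z : A) : forall c (x y : A), amul (c *: x + y) z = c *: amul x z + amul y z.
Proof. by move=> c x y; apply: amulDl. Qed.
Lemma amulR (z : A) : forall c (x y : A), amul z (c *: x + y) = c *: amul z x + amul z y.
Proof. by move=> c x y; apply: amulDr. Qed.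

Definition Areg : lmodule A :=
  @LModule A A (@amul A) (fun c a b m => amulDl c a b m) (fun c a m n => amulDr c m n a)
    (fun a b m => esym (amulA a b m)).

Variables (I : Type) (e : I -> A).
Hypothesis He : forall i, Defs.idempotent (e i).
Hypothesis Ho : forall i j, i <> j -> amul (e i) (e j) = 0.

Lemma sum_e_notin (L : seq I) j : ~ List.In j L -> amul (\sum_(k <- L) e k) (e j) = 0.
Proof.
elim: L => [|k L IH] /= h; first by rewrite big_nil (lf0 (amulL _)).
rewrite big_cons (lfD (amulL _)) IH; last by move=> hh; apply: h; right.
rewrite Ho ?addr0 // => kj; apply: h; left.
by [].
Qed.

Lemma sum_e_in (L : seq I) j : List.NoDup L -> List.In j L -> amul (\sum_(k <- L) e k) (e j) = e j.
Proof.
elim: L => [|k L IH] //= hnd hin.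
inversion hnd as [|k' L' hk hnd']; subst.
rewrite big_cons (lfD (amulL _)).
case: hin => [<-|hin].
  by rewrite He sum_e_notin // addr0.
rewrite IH // Ho ?add0r // => kj; apply: hk; rewrite kj.
by [].
Qed.

Lemma sum_e_idem (L : seq I) : List.NoDup L -> Defs.idempotent (\sum_(k <- L) e k).
Proof.
move=> hnd; rewrite /Defs.idempotent (lf_sum0 (amulR _)).
by apply: big_In_eq => k hk; apply: sum_e_in.
Qed.

Lemma dedup (J : seq I) : exists L : seq I, List.NoDup L /\ forall j, List.In j J -> List.In j L.
Proof.
elim: J => [|j J [L [hnd hsub]]]; first by exists [::]; split => //; constructor.
case: (classic (List.In j L)) => hj.
  exists L; split => // k /= [<-|hk] //; exact: hsub.
exists (j :: L); split; first by constructor.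
move=> k /= [->|hk]; [by left | by right; apply: hsub].
Qed.

End Alg.

Lemma sum_e_dec (A : nualg) (I : Type) (e : I -> A)
  (He : forall i, Defs.idempotent (e i)) (Ho : forall i j, i <> j -> amul (e i) (e j) = 0)
  (L : seq I) (s : seq ((I * I) * A)) : List.NoDup L ->
  (forall t, List.In t s -> List.In t.1.1 L) ->
  amul (\sum_(k <- L) e k) (\sum_(t <- s) amul (amul (e t.1.1) t.2) (e t.1.2))
  = \sum_(t <- s) amul (amul (e t.1.1) t.2) (e t.1.2).
Proof.
move=> hnd hs; rewrite (lf_sum0 (amulR _)); apply: big_In_eq => t ht.
by rewrite !amulA sum_e_in //; apply: hs.
Qed.

Lemma act_linl (A : nualg) (M : lmodule A) (m : M) :
  forall c (a b : A), act (c *: a + b) m = c *: act a m + act b m.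
Proof. by move=> c a b; apply: actDl. Qed.
Lemma act_linr (A : nualg) (M : lmodule A) (a : A) :
  forall c (m n : M), act a (c *: m + n) = c *: act a m + act a n.
Proof. by move=> c m n; apply: actDr. Qed.

Lemma actZl (A : nualg) (M : lmodule A) (c : CC) (a : A) (m : M) :
  act (c *: a) m = c *: act a m.
Proof.
have h0 : act (0 : A) m = 0 := lf0 (act_linl m).
by have := actDl c a 0 m; rewrite !addr0 h0 addr0.
Qed.

Lemma hom_lin (A : nualg) (M N : lmodule A) (f : M -> N) : is_hom f ->
  forall c x y, f (c *: x + y) = c *: f x + f y.
Proof. by case. Qed.

Lemma kernel_sub (A : nualg) (M N : lmodule A) (f : M -> N) : is_hom f ->
  submodule (fun m => f m = 0).
Proof.
move=> hf; split; first exact: (lf0 (hom_lin hf)).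
split.
  by move=> c x y hx hy; rewrite (hom_lin hf) hx hy scaler0 addr0.
by move=> a x hx; case: hf => _ ->; rewrite hx (lf0 (act_linr a)).
Qed.

Lemma irr_coherent (A : nualg) (S : lmodule A) : irreducible S -> quasicoherent S -> coherent S.
Proof.
move=> [[x0 hx0] hirr] hqc; split => //; exists [:: x0] => P hP hg.
case: (hirr P hP) => // h; exfalso; apply: hx0; apply: h; apply: hg.
by rewrite inE.
Qed.

Lemma gensJ (A : nualg) (I : Type) (e : I -> A)
  (Hdec : forall x : A, exists s : seq ((I * I) * A), x = \sum_(t <- s) amul (amul (e t.1.1) t.2) (e t.1.2))
  (M : lmodule A) (hqc : quasicoherent M) (gens : seq M) :
  exists J : seq I, forall g, g \in gens -> exists s : seq ((I * I) * A),
    g = act (\sum_(t <- s) amul (amul (e t.1.1) t.2) (e t.1.2)) g /\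
    forall t, List.In t s -> List.In t.1.2 J.
Proof.
elim: gens => [|g gens [J HJ]]; first by exists [::].
have [a ha] := hqc g; have [s hs] := Hdec a.
exists (map (fun t => t.1.2) s ++ J) => g'; rewrite inE => /orP [/eqP ->|hg'].
  exists s; split; first by rewrite -hs.
  move=> t ht; apply: List.in_or_app; left; exact: (List.in_map (fun t => t.1.2)).
have [s' [h1 h2]] := HJ g' hg'; exists s'; split => // t ht.
by apply: List.in_or_app; right; apply: h2.
Qed.

Lemma fwd (A : nualg) : AUF A -> (exists M : lmodule A, projective_generator_Coh M) -> strongly_AUF A.
Proof.
move=> hAUF [M [[Mqc [gens Mgen]] [_ Mgen2]]].
split => //.
case: hAUF => I [e [He [Ho [_ Hdec]]]].
have [J HJ] := gensJ Hdec Mqc gens.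
have [L [hnd hJL]] := dedup J.
exists (\sum_(k <- L) e k); split; first exact: sum_e_idem.
move=> S Sirr Sqc.
have [n [_ [f [fhom fsurj]]]] := Mgen2 S (irr_coherent Sirr Sqc).
have [[y hy] Sirr2] := Sirr.
have [k [g [hg hfg]]] : exists k g, g \in gens /\ f k g <> 0.
  apply: NNPP => hn; apply: hy.
  have [x ->] := fsurj y.
  rewrite big1 // => k _.
  apply: (Mgen _ (kernel_sub (fhom k))) => g hg.
  by apply: NNPP => hfg; apply: hn; exists k, g.
have [s [hgs hsJ]] := HJ g hg.
set sv := f k g in hfg.
have hsv : sv = act (\sum_(t <- s) amul (amul (e t.1.1) t.2) (e t.1.2)) sv.
  by rewrite /sv {1}hgs; case: (fhom k) => _ ->.
rewrite (lf_sum0 (act_linl sv)) in hsv.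
have [t [ht hnz]] : exists t, List.In t s /\ act (amul (amul (e t.1.1) t.2) (e t.1.2)) sv <> 0.
  by apply: big_In_nz; rewrite -hsv.
set j := t.1.2.
set n0 := act (e j) sv.
have hn0 : n0 <> 0.
  move=> h0; apply: hnz; rewrite actA -/j -/n0 h0.
  exact: (lf0 (act_linr _)).
have hjL : amul (\sum_(k <- L) e k) (e j) = e j by apply: sum_e_in => //; apply: hJL; apply: hsJ.
have hejn : act (e j) n0 = n0 by rewrite /n0 -actA He.
exists (fun z : Ae (\sum_(k <- L) e k) => act (amul (proj1_sig z) (e j)) n0).
split.
  split.
    by move=> c x y' z ->; rewrite amulDl actDl.
  by move=> a x z ->; rewrite -amulA actA.
move=> m.
pose P := fun m : S => exists b, m = act (amul b (e j)) n0.
have hP : submodule P.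
  split; first by exists 0; rewrite (lf0 (amulL _)) (lf0 (act_linl _)).
  split.
    move=> c x1 x2 [b1 ->] [b2 ->]; exists (c *: b1 + b2).
    by rewrite amulDl actDl.
  by move=> a x1 [b1 ->]; exists (amul a b1); rewrite -actA amulA.
case: (Sirr2 P hP) => [h0|hall].
  by exfalso; apply: hn0; apply: h0; exists (e j); rewrite He.
have [b ->] := hall m.
exists (exist _ (amul (amul b (e j)) (\sum_(k <- L) e k)) (ex_intro _ (amul b (e j)) erefl)).
by rewrite /= -amulA hjL -amulA He.
Qed.

Section MaxSub.
Variables (A : nualg) (N : lmodule A) (gens : seq N) (K : N -> Prop).
Hypothesis HK : submodule K.
Hypothesis HKg : ~ (forall g, g \in gens -> K g).

Definition goodsub (X : N -> Prop) :=
  submodule X /\ (forall x, K x -> X x) /\ ~ (forall g, g \in gens -> X g).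
Definition Pfam (X : set N) := X = set0 \/ goodsub X.

Lemma Pfam_ne X x : Pfam X -> X x -> goodsub X.
Proof. by case => // ->. Qed.

Lemma max_sub : exists K', goodsub K' /\
  forall Q, goodsub Q -> (forall x, K' x -> Q x) -> forall x, Q x -> K' x.
Proof.
have [M0 [PM0 Mmax]] : exists A0, Pfam A0 /\ forall B, proper A0 B -> ~ Pfam B.
  apply: Zorn_bigcup => F FP Ftot.
  case: (classic (exists X0, F X0 /\ exists x, X0 x)) => [[X0 [FX0 [x0 hx0]]]|hno].
    have gX0 := Pfam_ne (FP _ FX0) hx0.
    have hU : forall X x, F X -> X x -> goodsub X.
      by move=> X x FX hx; apply: (Pfam_ne (FP _ FX) hx).
    right; split; [split; [|split]|split].
    - by exists X0 => //; case: gX0 => [[h0 _] _].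
    - move=> c x y [X1 FX1 h1] [X2 FX2 h2].
      case: (Ftot _ _ FX1 FX2) => hs.
        exists X2 => //; case: (hU _ _ FX2 h2) => [[_ [hc _]] _].
        by apply: hc => //; apply: hs.
      exists X1 => //; case: (hU _ _ FX1 h1) => [[_ [hc _]] _].
      by apply: hc => //; apply: hs.
    - move=> a x [X1 FX1 h1]; exists X1 => //.
      by case: (hU _ _ FX1 h1) => [[_ [_ ha]] _]; apply: ha.
    - by move=> x kx; exists X0 => //; case: gX0 => [_ [h _]]; apply: h.
    - move=> hall.
      have : forall l : seq N, (forall g, g \in l -> g \in gens) ->
          exists X, F X /\ (forall x, X0 x -> X x) /\ forall g, g \in l -> X g.
        elim => [|g l IH] hl; first by exists X0.
        have [X [FX [hX0 hXl]]] := IH (fun g' hg' => hl g' (@mem_behead _ (g :: l) g' hg')).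
        have [Y FY hY] := hall g (hl g (mem_head _ _)).
        case: (Ftot _ _ FX FY) => hs.
          exists Y; split => //; split; first by move=> x hx; apply: hs; apply: hX0.
          move=> g'; rewrite inE => /orP [/eqP ->|hg'] //; apply: hs; exact: hXl.
        exists X; split => //; split => // g'; rewrite inE => /orP [/eqP ->|hg']; last exact: hXl.
        exact: hs.
      move=> /(_ gens (fun g h => h)) [X [FX [hX0 hXg]]].
      by case: (hU _ _ FX (hX0 _ hx0)) => [_ [_ hng]]; apply: hng.
  left; apply: funext => x; apply: propext; split => //.
  by move=> [X FX hx]; apply: hno; exists X; split => //; exists x.
have gM0 : goodsub M0.
  case: PM0 => // hM0; exfalso; apply: (Mmax K); last by right; split => //; split.
  rewrite hM0; split => // hsub; case: HK => h0 _; exact: (hsub 0 h0).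
exists M0; split => // Q gQ hMQ x hQx.
apply: NNPP => hnx; apply: (Mmax Q); last by right.
by split => // hsub; apply: hnx; apply: hsub.
Qed.
End MaxSub.

Lemma quot_qc (A : nualg) (N : lmodule A) (K : N -> Prop) (HK : submodule K) :
  quasicoherent N -> quasicoherent (quotmod HK).
Proof.
move=> hqc; elim/quotind => x; have [a ha] := hqc x.
by exists a; rewrite cls_act -ha.
Qed.

Lemma quot_irr (A : nualg) (N : lmodule A) (gens : seq N)
  (HgN : forall P : N -> Prop, submodule P -> (forall g, g \in gens -> P g) -> forall x, P x)
  (K : N -> Prop) (HK : submodule K)
  (gK : ~ (forall g, g \in gens -> K g))
  (Kmax : forall Q, goodsub gens K Q -> (forall x, K x -> Q x) -> forall x, Q x -> K x) :
  irreducible (quotmod HK).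
Proof.
split.
  have [g [hg hKg]] : exists g, g \in gens /\ ~ K g.
    by apply: NNPP => hn; apply: gK => g hg; apply: NNPP => hk; apply: hn; exists g.
  by exists (cls HK g) => /cls_eq0.
move=> Q [Q0 [QL Qa]].
pose Q' := fun x : N => Q (cls HK x).
have hQ' : submodule Q'.
  split; first by rewrite /Q' cls_zero.
  split; first by move=> c x y hx hy; rewrite /Q' cls_lin; apply: QL.
  by move=> a x hx; rewrite /Q' -cls_act; apply: Qa.
have hKQ : forall x, K x -> Q' x by move=> x /(cls_eq0 HK) h; rewrite /Q' h.
case: (classic (forall g, g \in gens -> Q' g)) => hg.
  by right; elim/quotind => x; exact: (HgN _ hQ' hg x).
left; elim/quotind => x hx; apply/cls_eq0; by apply: (Kmax Q').
Qed.

Section Bwd.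
Variables (A : nualg) (I : Type) (e : I -> A).
Hypothesis He : forall i, Defs.idempotent (e i).
Hypothesis Ho : forall i j, i <> j -> amul (e i) (e j) = 0.
Hypothesis Hdec : forall x : A, exists s : seq ((I * I) * A),
  x = \sum_(t <- s) amul (amul (e t.1.1) t.2) (e t.1.2).
Variable e0 : A.
Hypothesis Hgen : generating_idempotent e0.

Lemma He0 : amul e0 e0 = e0. Proof. by case: Hgen. Qed.

Definition Kz := fun x : Areg A => amul x e0 = 0.
Lemma Kzsub : submodule Kz.
Proof.
split; first exact: (lf0 (amulL _)).
split; first by move=> c x y hx hy; rewrite /Kz amulDl hx hy scaler0 addr0.
by move=> a x hx; rewrite /Kz /= -amulA hx (lf0 (amulR _)).
Qed.

Definition Mq : lmodule A := quotmod Kzsub.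
Definition pi (x : A) : Mq := cls Kzsub x.

Lemma key x y : pi x = pi y <-> amul x e0 = amul y e0.
Proof.
rewrite /pi cls_eqE /Kz /= (lfB (amulL _)); split; first by move/eqP; rewrite subr_eq0 => /eqP.
by move=> ->; rewrite subrr.
Qed.

Lemma piE x : pi x = pi (amul x e0).
Proof. by apply/key; rewrite -amulA He0. Qed.

Lemma pi_act a x : act a (pi x) = pi (amul a x).
Proof. exact: cls_act. Qed.

Lemma pi_lin c x y : pi (c *: x + y) = c *: pi x + pi y.
Proof. exact: cls_lin. Qed.

Lemma pi_ind (P : Mq -> Prop) : (forall x, P (pi x)) -> forall q, P q.
Proof. exact: (@quotind A (Areg A) Kz Kzsub P). Qed.

Definition hmap (N : lmodule A) (n : N) (m : Mq) : N := act (amul (rep m) e0) n.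

Lemma h_pi (N : lmodule A) (n : N) x : hmap n (pi x) = act (amul x e0) n.
Proof. by rewrite /hmap; congr act; apply/key; rewrite /pi repK. Qed.

Lemma hmap_hom (N : lmodule A) (n : N) : is_hom (hmap n).
Proof.
split.
  move=> c; elim/pi_ind => x; elim/pi_ind => y.
  by rewrite -pi_lin !h_pi amulDl actDl.
by move=> a; elim/pi_ind => x; rewrite pi_act !h_pi -amulA actA.
Qed.

Lemma Mq_coh : coherent Mq.
Proof.
split.
  elim/pi_ind => x; have [s hs] := Hdec (amul x e0).
  have [L [hnd hL]] := dedup (map (fun t => t.1.1) s).
  exists (\sum_(k <- L) e k); rewrite pi_act; apply/key.
  rewrite -amulA hs sum_e_dec //.
  by move=> t ht; apply: hL; apply: (List.in_map (fun t => t.1.1)).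
exists [:: pi e0] => P hP hg; elim/pi_ind => x.
have := hP.2.2 x _ (hg _ (mem_head _ _)).
by rewrite pi_act -piE.
Qed.

Lemma Mq_proj : projective Mq.
Proof.
move=> N N' p f hp hps hf.
have [x hx] := hps (f (pi e0)).
exists (hmap x); split; first exact: hmap_hom.
elim/pi_ind => y; rewrite h_pi; case: hp => _ hp2; rewrite hp2 hx.
by case: hf => _ <-; rewrite pi_act -!piE.
Qed.

Lemma KNall (N : lmodule A) : coherent N -> forall y : N,
  exists s : seq (A * N), y = \sum_(t <- s) act t.1 (act e0 t.2).
Proof.
move=> [Nqc [gens HgN]].
pose Ks := fun y : N => exists s : seq (A * N), y = \sum_(t <- s) act t.1 (act e0 t.2).
have hKs : submodule Ks.
  split; first by exists [::]; rewrite big_nil.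
  split.
    move=> c x y [s1 ->] [s2 ->]; exists (map (fun t => (c *: t.1, t.2)) s1 ++ s2).
    rewrite big_cat big_map scaler_sumr; congr (_ + _); apply: eq_bigr => t _ /=.
    by rewrite actZl.
  move=> a x [s ->]; exists (map (fun t => (amul a t.1, t.2)) s).
  by rewrite big_map (lf_sum0 (act_linr a)); apply: eq_bigr => t _; rewrite actA.
apply: NNPP => hn.
have hng : ~ (forall g, g \in gens -> Ks g) by move=> h; apply: hn; apply: HgN _ hKs h.
have [K' [[hK' [hKK' hK'g]] K'max]] := max_sub hKs hng.
have Kmax : forall Q, goodsub gens K' Q -> (forall x, K' x -> Q x) -> forall x, Q x -> K' x.
  move=> Q [gQ1 [gQ2 gQ3]] hQ; apply: K'max => //; split => //; split => // x kx.
  by apply: hQ; apply: hKK'.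
have Sirr := quot_irr HgN hK' hK'g Kmax.
have Sqc := quot_qc (HK := hK') Nqc.
have [f [[_ fact] fsurj]] := Hgen.2 (quotmod hK') Sirr Sqc.
have hz : forall q : quotmod hK', act e0 q = 0.
  elim/quotind => m; rewrite cls_act; apply/cls_eq0; apply: hKK'.
  by exists [:: (e0, m)]; rewrite big_cons big_nil addr0 /= -actA He0.
case: Sirr => [[q hq] _]; apply: hq.
have [z <-] := fsurj q.
have ez : exists a, e0 = amul a e0 by exists e0; rewrite He0.
pose ze := exist (fun x => exists a, x = amul a e0) e0 ez.
have hfe : f ze = 0 by rewrite (fact e0 ze ze) ?hz //= He0.
case: z => zz [a hzz].
rewrite (fact a ze) ?hfe; [exact (lf0 (act_linr a)) | exact hzz].
Qed.

Lemma gen_part (N : lmodule A) : coherent N -> exists n, (1 <= n)%N /\ quotient_of_power Mq N n.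
Proof.
move=> hN; have hK := KNall hN; case: hN => [_ [gens HgN]].
have [L HL] : exists L : seq N, forall g, g \in gens -> exists s : seq (A * N),
    g = \sum_(t <- s) act t.1 (act e0 t.2) /\ forall t, t \in s -> t.2 \in L.
  elim: gens {HgN} => [|g gens [L HL]]; first by exists [::].
  have [s hs] := hK g; exists (map snd s ++ L) => g'; rewrite inE => /orP [/eqP ->|hg'].
    by exists s; split => // t ht; rewrite mem_cat map_f.
  have [s' [h1 h2]] := HL g' hg'; exists s'; split => // t ht.
  by rewrite mem_cat h2 ?orbT.
exists (size L).+1; split => //.
exists (fun k => hmap (nth 0 L k)); split; first by move=> k; apply: hmap_hom.
pose Y := fun y : N => exists x : 'I_(size L).+1 -> Mq,
  y = \sum_(k < (size L).+1) hmap (nth 0 L k) (x k).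
have hY : submodule Y.
  split; first by exists (fun _ => 0); rewrite big1 // => k _; apply: (lf0 (hom_lin (hmap_hom _))).
  split.
    move=> c y1 y2 [x1 ->] [x2 ->]; exists (fun k => c *: x1 k + x2 k).
    rewrite scaler_sumr -big_split; apply: eq_bigr => k _.
    by rewrite (hom_lin (hmap_hom _)).
  move=> a y [x ->]; exists (fun k => act a (x k)).
  rewrite (lf_sum0 (act_linr a)); apply: eq_bigr => k _.
  by case: (hmap_hom (nth 0 L k)) => _ ->.
have hact : forall b m, m \in L -> Y (act b (act e0 m)).
  move=> b m hm.
  have hk : (index m L < (size L).+1)%N by rewrite ltnS index_size.
  pose k0 := Ordinal hk.
  exists (fun k => if k == k0 then pi b else 0).
  rewrite (bigD1 k0) //= eqxx big1 ?addr0; last first.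
    by move=> k /negbTE ->; apply: (lf0 (hom_lin (hmap_hom _))).
  by rewrite h_pi nth_index // actA.
have hsum : forall s : seq (A * N), (forall t, t \in s -> t.2 \in L) ->
    Y (\sum_(t <- s) act t.1 (act e0 t.2)).
  elim => [|t s IH] hs; first by rewrite big_nil; case: hY.
  rewrite big_cons.
  have := hY.2.1 1 _ _ (hact t.1 t.2 (hs t (mem_head _ _)))
     (IH (fun t' h => hs t' ltac:(by rewrite inE h orbT))).
  by rewrite scale1r.
move=> y.
have hall : forall y, Y y.
  move=> y'; apply: (HgN Y hY) => g hg; have [s [-> hs]] := HL g hg; exact: hsum.
have [x ->] := hall y; by exists x.
Qed.

End Bwd.

Theorem proposition7p8 (A : nualg) :
  AUF A ->
  ((exists M : lmodule A, projective_generator_Coh M) <-> strongly_AUF A).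
Proof.
move=> hAUF; split; first exact: fwd.
move=> [[I [e [He [Ho [_ Hdec]]]]] [e0 Hgen]].
exists (Mq e0); split; first exact: (Mq_coh He Ho Hdec).
split; first exact: Mq_proj Hgen.
move=> N; exact: (gen_part Hgen).
Qed.
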